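(* Let $q$ be a prime power, $n,r$ integers with $r\le\lfloor n/2\rfloor$, $0<\rho<r$, and let $\mathcal{C}\subseteq E_r(q,n)$ have covering radius $\rho$. Let $\mathcal{A} = \{U\in E_r(q,n): d_{\mathrm{I}}(U,\mathcal{C}) = \rho\}$ and $\mathcal{Z} = \{Z\in E_r(q,n): E_{\mathcal{C}}(\{Z\})\ge 1\}$. Then for every $Z\in\mathcal{Z}$, $|\mathcal{A}\cap B_1(Z)|\le V_{\mathrm{C}}(1) - c_\rho$.
   Context: $E_r(q,n)$ is the set of $r$-dimensional subspaces of $\mathrm{GF}(q)^n$ with injection distance $d_{\mathrm{I}}(U,V)=\dim(U+V)-\min\{\dim U,\dim V\}$; $d_{\mathrm{I}}(U,\mathcal{C})=\min_{C\in\mathcal{C}}d_{\mathrm{I}}(U,C)$; $B_t(U)=\{V\in E_r(q,n): d_{\mathrm{I}}(U,V)\le t\}$. The covering radius of $\mathcal{C}$ is $\max_U d_{\mathrm{I}}(U,\mathcal{C})$. For $V\subseteq E_r(q,n)$, $E_{\mathcal{C}}(V) = \sum_{C\in\mathcal{C}}|B_\rho(C)\cap V| - |V|$. ${m\brack k}=\prod_{i=0}^{k-1}\frac{q^m-q^i}{q^k-q^i}$; $N_{\mathrm{C}}(d) = q^{d^2}{r\brack d}{n-r \brack d}$, $V_{\mathrm{C}}(t)=\sum_{d=0}^tN_{\mathrm{C}}(d)$; $c_j = {j\brack 1}^2$. *)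

(* Defs.v *)
(* Subspaces of GF(q)^n are represented canonically by the
   square matrices A : 'M[F]_n with <<A>>%MS = A (row space = the subspace). *)
From HB Require Import structures.
From mathcomp Require Import all_boot all_order all_algebra all_field.
Set Implicit Arguments. Unset Strict Implicit. Unset Printing Implicit Defensive.
Import Order.TTheory GRing.Theory Num.Theory.

Section Defs.
Variables (F : finFieldType) (n : nat).

Definition Er (r : nat) : {set 'M[F]_n} :=
  [set U : 'M[F]_n | (<<U>>%MS == U) && (\rank U == r)].

Definition dI (U V : 'M[F]_n) : nat :=
  (\rank (U + V)%MS - minn (\rank U) (\rank V))%N.

(* distance to a code (min over the code; default n if the code is empty) *)
Definition dIC (U : 'M[F]_n) (C : {set 'M[F]_n}) : nat :=
  \big[minn/n]_(X in C) dI U X.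

Definition covering_radius (r : nat) (C : {set 'M[F]_n}) : nat :=
  \max_(U in Er r) dIC U C.

Definition ball (r t : nat) (U : 'M[F]_n) : {set 'M[F]_n} :=
  [set V in Er r | dI U V <= t].

Definition excess (r rho : nat) (C : {set 'M[F]_n}) (V : {set 'M[F]_n}) : int :=
  (\sum_(X in C) #|ball r rho X :&: V|)%:Z - #|V|%:Z.

Definition Aset (r rho : nat) (C : {set 'M[F]_n}) : {set 'M[F]_n} :=
  [set U in Er r | dIC U C == rho].

Definition Zset (r rho : nat) (C : {set 'M[F]_n}) : {set 'M[F]_n} :=
  [set Z in Er r | (1 <= excess r rho C [set Z])%R].

End Defs.

Local Open Scope ring_scope.

Definition gaussb (q m k : nat) : rat :=
  \prod_(i < k) ((q%:R ^+ m - q%:R ^+ i) / (q%:R ^+ k - q%:R ^+ i)).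

Definition NC (q n r d : nat) : rat :=
  (q%:R ^+ (d * d)) * gaussb q r d * gaussb q (n - r) d.

Definition VC (q n r t : nat) : rat := \sum_(d < t.+1) NC q n r d.

Definition cj (q j : nat) : rat := gaussb q j 1 ^+ 2.

(* Main.v *)
Require Import Defs.
From HB Require Import structures.
From mathcomp Require Import all_boot all_order all_algebra all_field.
From mathcomp Require Import ring lra zify.
Set Implicit Arguments. Unset Strict Implicit. Unset Printing Implicit Defensive.
Import Order.TTheory GRing.Theory Num.Theory.
Local Open Scope ring_scope.

Section Norm.
Variable F : finFieldType.

Definition normz m (p : 'I_m) (v : 'rV[F]_m) : bool :=
  (v 0 p == 1) && [forall j : 'I_m, (j < p)%N ==> (v 0 j == 0)].

Lemma normz_neq0 m (p : 'I_m) v : normz p v -> v != 0.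
Proof.
case/andP=> /eqP vp _; apply/eqP=> v0; move: vp; rewrite v0 mxE => /eqP.
by rewrite eq_sym oner_eq0.
Qed.

Lemma normz_lt m (p : 'I_m) v (j : 'I_m) : normz p v -> (j < p)%N -> v 0 j = 0.
Proof. by case/andP=> _ /forallP/(_ j)/implyP H /H/eqP. Qed.

Lemma normz_scale m (p p' : 'I_m) h h' c :
  normz p h -> normz p' h' -> h = c *: h' -> p = p' /\ h = h'.
Proof.
move=> Nh Nh' E.
have hp : h 0 p = 1 by case/andP: Nh => /eqP.
have hp' : h' 0 p' = 1 by case/andP: Nh' => /eqP.
have pp : p = p'.
  case: (ltngtP p p') => [lt|lt|/val_inj //].
  - move: hp; rewrite E mxE (normz_lt Nh' lt) mulr0 => /eqP; by rewrite eq_sym oner_eq0.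
  - move: (normz_lt Nh lt); rewrite E mxE hp' mulr1 => c0.
    by move: hp; rewrite E mxE c0 mul0r => /eqP; rewrite eq_sym oner_eq0.
subst p'; split=> //.
have : c = 1 by move: hp; rewrite E mxE hp' mulr1.
by move=> c1; rewrite E c1 scale1r.
Qed.

Lemma normz_exists m (v : 'rV[F]_m) : v != 0 ->
  exists p c h, [/\ normz p h, c != 0 & v = c *: h].
Proof.
move=> nz.
have [j0 vj0] : exists j, v 0 j != 0.
  apply/existsP; apply: contraR nz; rewrite negb_exists => /forallP H.
  apply/eqP/matrixP=> i j; rewrite !mxE (ord1 i); exact/eqP/negbNE/H.
case: (@arg_minnP _ j0 (fun j => v 0 j != 0) (fun j : 'I_m => val j) vj0) => p vp pmin.
exists p, (v 0 p), ((v 0 p)^-1 *: v); split => //.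
- rewrite /normz mxE mulVf //= eqxx /=; apply/forallP=> j; apply/implyP=> jp.
  rewrite mxE; case: (v 0 j =P 0) => [->|/eqP H]; first by rewrite mulr0.
  by move: (pmin j H); rewrite leqNgt jp.
- by rewrite scalerA divff // scale1r.
Qed.

Definition NVset m : {set 'I_m * 'rV[F]_m} := [set x | normz x.1 x.2].

Lemma NVset_card m : (#|NVset m| * #|F|.-1 = #|F| ^ m - 1)%N.
Proof.
set D := setX [set c : F | c != 0] (NVset m).
have cD : #|D| = (#|F|.-1 * #|NVset m|)%N.
  rewrite cardsX; congr (_ * _)%N.
  by rewrite -(cardsC1 (0:F)); apply: eq_card => c; rewrite !inE.
have -> : (#|F| ^ m - 1 = #|[set~ (0 : 'rV[F]_m)%R]|)%N.
  by rewrite cardsC1 card_mx mul1n subn1.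
rewrite mulnC -cD.
have inj : {in D &, injective (fun x : F * ('I_m * 'rV[F]_m) => x.1 *: x.2.2)}.
  move=> [c [p h]] [c' [p' h']]; rewrite !inE /= => /andP[c0 N] /andP[c'0 N'] E.
  have E2 : h = (c^-1 * c') *: h' by rewrite -scalerA -E scalerA mulVf // scale1r.
  case: (normz_scale N N' E2) => pp hh; subst p' h'.
  suff -> : c = c' by [].
  have h0 := normz_neq0 N.
  have : (c - c') *: h = 0 by rewrite scalerBl E subrr.
  by move/eqP; rewrite scaler_eq0 (negbTE h0) orbF subr_eq0 => /eqP.
rewrite -(card_in_imset inj); apply: eq_card => v.
rewrite !inE; apply/imsetP/idP.
- case=> [[c [p h]]]; rewrite !inE /= => /andP[c0 N] ->.
  by rewrite scaler_eq0 negb_or c0 (normz_neq0 N).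
- move=> nz; case: (normz_exists nz) => p [c [h [N c0 E]]].
  by exists (c, (p, h)); rewrite // !inE /= c0.
Qed.
End Norm.

Section Dot.
Variable F : finFieldType.
Definition dot m (a g : 'rV[F]_m) := (a *m g^T) 0 0.

Lemma mulT0 m (a g : 'rV[F]_m) : (a *m g^T == 0) = (dot a g == 0).
Proof.
rewrite /dot; apply/eqP/eqP => [->|H]; first by rewrite mxE.
by apply/matrixP => i j; rewrite (ord1 i) (ord1 j) [RHS]mxE H.
Qed.

Lemma dotD m (a b g : 'rV[F]_m) : dot (a + b) g = dot a g + dot b g.
Proof. by rewrite /dot mulmxDl mxE. Qed.
Lemma dotZ m c (a g : 'rV[F]_m) : dot (c *: a) g = c * dot a g.
Proof. by rewrite /dot -scalemxAl mxE. Qed.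
Lemma dotN m (a g : 'rV[F]_m) : dot (- a) g = - dot a g.
Proof. by rewrite -scaleN1r dotZ mulN1r. Qed.
Lemma dot_delta m (j : 'I_m) (g : 'rV[F]_m) : dot (delta_mx 0 j) g = g 0 j.
Proof. by rewrite /dot -rowE !mxE. Qed.

Lemma normz_ker m (p p' : 'I_m) (g g' : 'rV[F]_m) : normz p g -> normz p' g' ->
  (forall a : 'rV_m, (a *m g^T == 0) = (a *m g'^T == 0)) -> p = p' /\ g = g'.
Proof.
move=> N N' H.
have gp : g 0 p = 1 by case/andP: N => /eqP.
have E : g' = g' 0 p *: g.
  apply/matrixP => i j; rewrite (ord1 i) mxE.
  have := H (delta_mx 0 j - g 0 j *: delta_mx 0 p).
  rewrite !mulT0 !dotD !dotN !dotZ !dot_delta gp mulr1 subrr eqxx.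
  by move/esym; rewrite subr_eq0 mulrC => /eqP.
by case: (normz_scale N' N E) => -> ->.
Qed.

Lemma rank_add_row m n (A : 'M[F]_(m, n)) (y : 'rV_n) :
  ~~ (y <= A)%MS -> \rank (A + y)%MS = (\rank A).+1.
Proof.
move=> nyA; apply/eqP; rewrite eqn_leq; apply/andP; split.
  apply: leq_trans (mxrank_adds_leqif A y).1 _.
  by rewrite -[(\rank A).+1]addn1 leq_add2l rank_leq_row.
apply: rank_ltmx; rewrite ltmxE addsmxSl /=; apply: contra nyA.
exact: submx_trans (addsmxSr _ _).
Qed.
End Dot.

Section Fam.
Variables (F : finFieldType) (n m1 m2 : nat).
Variables (W : 'M[F]_n) (Bz : 'M[F]_(m1, n)) (Bc : 'M[F]_(m2, n)).
Hypothesis indep : forall (w : 'rV_n) a b, (w <= W)%MS ->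
  w + a *m Bz + b *m Bc = 0 -> a = 0 /\ b = 0.

Definition lin (w : 'rV_n) a b := w + a *m Bz + b *m Bc.

Lemma lin_uniq w w' a a' b b' : (w <= W)%MS -> (w' <= W)%MS ->
  lin w a b = lin w' a' b' -> [/\ w = w', a = a' & b = b'].
Proof.
move=> Hw Hw' E.
have Hd : (w - w' <= W)%MS by rewrite addmx_sub // -scaleN1r scalemx_sub.
have L : lin w a b - lin w' a' b' = (w - w') + (a - a') *m Bz + (b - b') *m Bc.
  by rewrite /lin !mulmxBl opprD addrACA opprD [w + _ + (- w' - _)]addrACA.
have : (w - w') + (a - a') *m Bz + (b - b') *m Bc = 0 by rewrite -L E subrr.
case/(indep Hd) => /eqP; rewrite subr_eq0 => /eqP ab /eqP; rewrite subr_eq0 => /eqP bb.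
split=> //; move: E; rewrite /lin ab bb => /eqP; rewrite -!addrA.
by rewrite (inj_eq (addIr _)) => /eqP.
Qed.


Definition dp (p : 'I_m1) : 'rV[F]_m1 := delta_mx 0 p.
Definition yv p (h : 'rV_m2) t := h *m Bc + (t *: dp p) *m Bz.
Definition famV (g : 'rV_m1) p h t := (W + kermx g^T *m Bz + yv p h t)%MS.

Lemma yv_lin p h t : yv p h t = lin 0 (t *: dp p) h.
Proof. by rewrite /lin add0r addrC. Qed.

Lemma famV_dec g p h t x : (x <= famV g p h t)%MS -> exists w k l,
  [/\ (w <= W)%MS, k *m g^T = 0 & x = lin w (k + l *: (t *: dp p)) (l *: h)].
Proof.
case/sub_addsmxP => [[u1 u2]] /= ->.
have : (u1 *m (W + kermx g^T *m Bz)%MS <= W + kermx g^T *m Bz)%MS by apply: submxMl.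
case/sub_addsmxP => [[v1 v2]] /= ->.
exists (v1 *m W), (v2 *m kermx g^T), (u2 0 0); split.
- exact: submxMl.
- by rewrite -mulmxA mulmx_ker mulmx0.
rewrite {1}[u2]mx11_scalar mul_scalar_mx /lin /yv mulmxA mulmxDl.
by rewrite -!scalemxAl scalerDr !addrA addrAC.
Qed.

Lemma famV_ker g p h t (a : 'rV_m1) : h != 0 ->
  (a *m Bz <= famV g p h t)%MS = (a *m g^T == 0).
Proof.
move=> h0; apply/idP/idP.
- case/famV_dec => w [k [l [Hw Hk E]]].
  have E2 : lin 0 a 0 = lin w (k + l *: (t *: dp p)) (l *: h).
    by rewrite -E /lin add0r mul0mx addr0.
  case: (lin_uniq (sub0mx _ _) Hw E2) => _ -> /esym/eqP.
  rewrite scaler_eq0 (negbTE h0) orbF => /eqP ->.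
  by rewrite scale0r addr0 Hk.
- rewrite -sub_kermx => H.
  apply: submx_trans (addsmxSl _ _); apply: submx_trans (addsmxSr _ _).
  exact: submxMr.
Qed.

Hypothesis Bz_free : row_free Bz.

Lemma famV_rank g p h t : normz p g -> h != 0 ->
  \rank (famV g p h t) = (\rank W + m1)%N.
Proof.
move=> Ng h0.
have r1 : \rank (kermx g^T *m Bz) = m1.-1.
  by rewrite mxrankMfree // mxrank_ker mxrank_tr rank_rV (normz_neq0 Ng) subn1.
have r2 : \rank (W + kermx g^T *m Bz)%MS = (\rank W + m1.-1)%N.
  rewrite -r1; apply: mxrank_disjoint_sum; apply/eqP; rewrite -submx0.
  apply/row_subP => i; rewrite submx0.
  have : (row i (W :&: kermx g^T *m Bz)%MS <= W :&: kermx g^T *m Bz)%MS.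
    by rewrite row_sub.
  rewrite sub_capmx => /andP[Hw /submxP[D HD]].
  have E : lin (row i (W :&: kermx g^T *m Bz)%MS) 0 0 = lin 0 (D *m kermx g^T) 0.
    by rewrite /lin !mul0mx !addr0 add0r HD mulmxA.
  by case: (lin_uniq Hw (sub0mx _ _) E) => ->.
have r3 : ~~ (yv p h t <= W + kermx g^T *m Bz)%MS.
  apply/negP; case/sub_addsmxP => [[u1 u2]] /=.
  rewrite yv_lin => E.
  have E2 : lin 0 (t *: dp p) h = lin (u1 *m W) (u2 *m kermx g^T) 0.
    by rewrite E /lin mul0mx addr0 mulmxA.
  case: (lin_uniq (sub0mx _ _) (submxMl _ _) E2) => _ _ /eqP.
  by rewrite (negbTE h0).
rewrite /famV rank_add_row // r2 -addnS prednK //.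
exact: (leq_ltn_trans (leq0n p) (ltn_ord p)).
Qed.

Lemma famV_sub (Z : 'M[F]_n) g p h t : (W <= Z)%MS -> (Bz <= Z)%MS ->
  (famV g p h t <= Z + yv p h t)%MS.
Proof.
move=> WZ BZ; apply: addsmxS (submx_refl _).
by rewrite addsmx_sub WZ /=; apply: submx_trans BZ; apply: submxMl.
Qed.

Lemma yv_notin (Z : 'M[F]_n) p h t : (Z <= W + Bz)%MS -> h != 0 ->
  ~~ (yv p h t <= Z)%MS.
Proof.
move=> ZWB h0; apply/negP => /submx_trans/(_ ZWB).
case/sub_addsmxP => [[u1 u2]] /=; rewrite yv_lin => E.
have E2 : lin 0 (t *: dp p) h = lin (u1 *m W) u2 0 by rewrite E /lin mul0mx addr0.
case: (lin_uniq (sub0mx _ _) (submxMl _ _) E2) => _ _ /eqP.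
by rewrite (negbTE h0).
Qed.

Lemma famV_inj g p h p1 t g' p' h' p1' t' :
  normz p g -> normz p1 h -> normz p' g' -> normz p1' h' ->
  <<famV g p h t>>%MS = <<famV g' p' h' t'>>%MS ->
  [/\ p = p', g = g', (p1 = p1' /\ h = h') & t = t'].
Proof.
move=> Ng Nh Ng' Nh' /genmxP /andP[S12 S21].
have h0 := normz_neq0 Nh; have h0' := normz_neq0 Nh'.
have [pp gg] : p = p' /\ g = g'.
  apply: normz_ker Ng Ng' _ => a; rewrite -(@famV_ker g p h t a h0) -(@famV_ker g' p' h' t' a h0').
  apply/idP/idP => H; [exact: submx_trans S12 | exact: submx_trans S21].
subst p' g'.
have : (yv p h t <= famV g p h' t')%MS.
  by apply: submx_trans S12; apply: addsmxSr.
case/famV_dec => w [k [l [Hw Hk]]]; rewrite yv_lin => E.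
case: (lin_uniq (sub0mx _ _) Hw E) => _ Ea Eh.
case: (normz_scale Nh Nh' Eh) => pp1 hh; subst p1' h'.
have l1 : l = 1.
  have : (1 - l) *: h = 0 by rewrite scalerBl scale1r -Eh subrr.
  move/eqP; rewrite scaler_eq0 (negbTE h0) orbF subr_eq0 => /eqP <-. done.
subst l; rewrite scale1r in Ea.
have gp : g 0 p = 1 by case/andP: Ng => /eqP.
have : dot (t *: dp p) g = dot (k + t' *: dp p) g by rewrite Ea.
rewrite dotD !dotZ /dp dot_delta gp !mulr1.
move/eqP: Hk; rewrite mulT0 => /eqP ->; rewrite add0r => tt.
by split.
Qed.
End Fam.

Section Up.
Variables (F : finFieldType) (n : nat).

Lemma cap0P m1 m2 (A : 'M[F]_(m1, n)) (B : 'M[F]_(m2, n)) (v : 'rV_n) :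
  (A :&: B)%MS = 0 -> (v <= A)%MS -> (v <= B)%MS -> v = 0.
Proof.
move=> AB vA vB; have : (v <= A :&: B)%MS by rewrite sub_capmx vA.
by rewrite AB submx0 => /eqP.
Qed.

Lemma indep_gen (W : 'M[F]_n) m1 m2 (Bz : 'M[F]_(m1, n)) (Bc : 'M[F]_(m2, n))
  (S1 : 'M[F]_n) :
  row_free Bz -> row_free Bc -> (W + Bz <= S1)%MS -> (S1 :&: Bc)%MS = 0 ->
  (W :&: Bz)%MS = 0 ->
  forall (w : 'rV_n) (a : 'rV_m1) (b : 'rV_m2), (w <= W)%MS -> w + a *m Bz + b *m Bc = 0 -> a = 0 /\ b = 0.
Proof.
move=> fz fc WS Sc Wz w a b Hw E.
have Eb : b *m Bc = - (w + a *m Bz) by apply/eqP; rewrite -addr_eq0 addrC E.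
have b0 : b *m Bc = 0.
  apply: (cap0P Sc) (submxMl _ _); rewrite Eb -scaleN1r scalemx_sub //.
  apply: submx_trans WS; apply: addmx_sub_adds => //; exact: submxMl.
have bz : b = 0 by apply: (row_free_inj fc); rewrite b0 mul0mx.
split=> //.
move: E; rewrite b0 addr0 => /eqP; rewrite addr_eq0 => /eqP E.
have a0 : a *m Bz = 0.
  apply: (cap0P Wz) (submxMl _ _).
  have -> : a *m Bz = - w by rewrite E opprK.
  by rewrite -scaleN1r scalemx_sub.
by apply: (row_free_inj fz); rewrite a0 mul0mx.
Qed.

Lemma dI_r r (U V : 'M[F]_n) : \rank U = r -> \rank V = r ->
  dI U V = (\rank (U + V) - r)%N.
Proof. by move=> rU rV; rewrite /dI rU rV minnn. Qed.

Lemma inEr r (V : 'M[F]_n) : (V \in Er F n r) = (<<V>>%MS == V) && (\rank V == r).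
Proof. by rewrite inE. Qed.

Lemma surj_up r (Z V : 'M[F]_n) : Z \in Er F n r -> V \in Er F n r ->
  (dI Z V <= 1)%N -> V != Z ->
  exists g p h p1 t, [/\ normz p g, normz p1 h &
   V = <<famV 0 (row_base Z) (row_base (Z^C)%MS) g p h t>>%MS].
Proof.
rewrite !inEr => /andP[/eqP gZ /eqP rZ] /andP[/eqP gV /eqP rV] dZV VZ.
set Bz := row_base Z; set Bc := row_base (Z^C)%MS.
have fz : row_free Bz := row_base_free Z.
have nVZ : ~~ (V <= Z)%MS.
  apply/negP => VZ'; move: VZ; rewrite -gZ -gV; apply/negP; rewrite negbK; apply/eqP.
  apply/genmxP; rewrite -(mxrank_leqif_eq VZ').2 rV rZ //.
have rZV : \rank (Z + V)%MS = r.+1.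
  apply/eqP; rewrite eqn_leq; apply/andP; split.
    by move: dZV; rewrite (dI_r rZ rV); lia.
  rewrite -rZ; apply: rank_ltmx; rewrite ltmxE addsmxSl /=; apply: contra nVZ.
  exact: submx_trans (addsmxSr _ _).
set H := (V :&: Z)%MS.
have rH : \rank H = r.-1.
  have := mxrank_sum_cap V Z; rewrite addsmxC rZV rV rZ /H; lia.
have HB : (H <= Bz)%MS by rewrite eq_row_base capmxSr.
set Hc := H *m pinvmx Bz.
have HcB : Hc *m Bz = H by apply: mulmxKpV.
have rHc : \rank Hc = r.-1 by rewrite -rH -HcB mxrankMfree.
have rm1 : \rank Z = r := rZ.
set K0 := kermx Hc^T.
have r0 : (0 < r)%N.
  rewrite lt0n; apply: contra nVZ => /eqP r0.
  by move: rV; rewrite r0 => /eqP; rewrite mxrank_eq0 => /eqP ->; apply: sub0mx.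
have rK0 : \rank K0 = 1%N by rewrite mxrank_ker mxrank_tr rHc rZ; lia.
have indep : forall (w : 'rV_n) (a : 'rV_(\rank Z)) (b : 'rV_(\rank (Z^C)%MS)),
    (w <= (0 : 'M_n))%MS -> w + a *m Bz + b *m Bc = 0 -> a = 0 /\ b = 0.
  apply: (@indep_gen 0 _ _ Bz Bc Z fz (row_base_free _)).
  - by rewrite addsmx_sub sub0mx eq_row_base submx_refl.
  - apply/eqP; rewrite -submx0; apply/row_subP => k; rewrite submx0.
    apply/eqP; apply: (cap0P (capmx_compl Z)).
      exact: submx_trans (row_sub _ _) (capmxSl _ _).
    have BcC : (Bc <= Z^C)%MS by rewrite /Bc eq_row_base.
    exact: submx_trans (submx_trans (row_sub _ _) (capmxSr _ _)) BcC.
  - by apply/eqP; rewrite -submx0; exact: capmxSl.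
have [i gi] : exists i, row i K0 != 0.
  have : ~~ (K0 <= (0 : 'M_(\rank Z)))%MS.
    by apply/negP => /mxrankS; rewrite rK0 mxrank0.
  by case/row_subPn => i; rewrite submx0 => gi; exists i.
set g0 := row i K0.
have g0H : g0 *m Hc^T = 0 by apply/sub_kermxP; exact: row_sub.
case: (normz_exists gi) => p [c [g [Ng c0 Eg]]].
have gH : Hc *m g^T = 0.
  have H0 : g *m Hc^T = 0.
    have -> : g = c^-1 *: g0 by rewrite /g0 Eg scalerA mulVf // scale1r.
    by rewrite -scalemxAl g0H scaler0.
  by apply: trmx_inj; rewrite trmx_mul trmxK H0 trmx0.
have HcK : (kermx g^T <= Hc)%MS.
  have HK : (Hc <= kermx g^T)%MS by apply/sub_kermxP.
  have := (mxrank_leqif_eq HK).2.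
  have e : (\rank Z - 1)%N = r.-1 by rewrite rZ subn1.
  rewrite rHc mxrank_ker mxrank_tr rank_rV (normz_neq0 Ng) /= e eqxx.
  by move/esym => /andP[].
have KV : (kermx g^T *m Bz <= V)%MS.
  by apply: submx_trans (submxMr Bz HcK) _; rewrite HcB capmxSl.
case/row_subPn: nVZ => j xZ.
have xBB : (row j V <= Bz + Bc)%MS.
  apply: submx_trans (submx_full _ (addsmx_compl_full Z)) _.
  by apply: addsmxS; rewrite eq_row_base.
case/sub_addsmxP: xBB => [[u1 u2]] /= xE.
have u20 : u2 != 0.
  apply: contra xZ => /eqP u0; rewrite xE u0 mul0mx addr0.
  by apply: submx_trans (submxMl _ _) _; rewrite eq_row_base.
case: (normz_exists u20) => p1 [be [h [Nh be0 Eh]]].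
set t := dot (be^-1 *: u1) g.
exists g, p, h, p1, t; split => //.
have gp : g 0 p = 1 by case/andP: Ng => /eqP.
set a' := be^-1 *: u1 - t *: dp F p.
have a'K : (a' <= kermx g^T)%MS.
  by rewrite sub_kermx mulT0 /a' dotD dotN dotZ /dp dot_delta gp mulr1 /t subrr.
have Ey : yv Bz Bc p h t = be^-1 *: row j V - a' *m Bz.
  rewrite /yv xE Eh /a' mulmxBl opprB scalerDr -!scalemxAl scalerA mulVf // scale1r.
  by rewrite [be^-1 *: _ + _]addrC addrACA subrr addr0.
have yV : (yv Bz Bc p h t <= V)%MS.
  rewrite Ey addmx_sub // ?scalemx_sub ?row_sub // -scaleN1r scalemx_sub //.
  exact: submx_trans (submxMr Bz a'K) KV.
have FV : (famV 0 Bz Bc g p h t <= V)%MS.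
  by rewrite /famV !addsmx_sub sub0mx KV yV.
apply/esym; rewrite -{1}gV; apply/genmxP.
by rewrite -(mxrank_leqif_eq FV).2 (famV_rank indep fz t Ng (normz_neq0 Nh)) mxrank0 rV rZ.
Qed.

Lemma ball_upper r (Z : 'M[F]_n) : Z \in Er F n r ->
  (#|ball r 1 Z| <= 1 + #|NVset F r| * (#|NVset F (n - r)| * #|F|))%N.
Proof.
move=> ZE; have := ZE; rewrite inEr => /andP[_ /eqP rZ].
set Bz := row_base Z; set Bc := row_base (Z^C)%MS.
pose P := setX (NVset F (\rank Z)) (setX (NVset F (\rank (Z^C)%MS)) [set: F]).
pose phi (x : ('I_(\rank Z) * 'rV[F]_(\rank Z)) *
   (('I_(\rank (Z^C)%MS) * 'rV[F]_(\rank (Z^C)%MS)) * F)) :=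
   <<famV 0 Bz Bc x.1.2 x.1.1 x.2.1.2 x.2.2>>%MS.
have sub : ball r 1 Z \subset Z |: (phi @: P).
  apply/subsetP => V; rewrite inE => /andP[VE dV].
  case: (eqVneq V Z) => [->|VZ]; first by rewrite setU11.
  rewrite in_setU1.
  case: (surj_up ZE VE dV VZ) => g [p [h [p1 [t [Ng Nh ->]]]]].
  apply/orP; right; apply/imsetP; exists ((p, g), ((p1, h), t)) => //.
  by rewrite !inE /= Ng Nh.
apply: leq_trans (subset_leq_card sub) _; rewrite cardsU1.
apply: leq_add (leq_b1 _) _; apply: leq_trans (leq_imset_card _ _) _.
by rewrite !cardsX cardsT mxrank_compl rZ.
Qed.

Lemma cap0_rows (A B : 'M[F]_n) m m' (M : 'M[F]_(m, n)) (N : 'M[F]_(m', n)) :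
  (A :&: B)%MS = 0 -> (M <= A)%MS -> (N <= B)%MS -> (M :&: N)%MS = 0.
Proof.
move=> AB MA NB; apply/eqP; rewrite -submx0; apply/row_subP => k; rewrite submx0.
apply/eqP; apply: (cap0P AB).
  exact: submx_trans (submx_trans (row_sub _ _) (capmxSl _ _)) MA.
exact: submx_trans (submx_trans (row_sub _ _) (capmxSr _ _)) NB.
Qed.

Lemma fam_in_ball r (Z W : 'M[F]_n) m1 m2 (Bz : 'M[F]_(m1, n)) (Bc : 'M[F]_(m2, n))
  (indep : forall (w : 'rV_n) (a : 'rV_m1) (b : 'rV_m2), (w <= W)%MS ->
     w + a *m Bz + b *m Bc = 0 -> a = 0 /\ b = 0)
  (fz : row_free Bz) g p h t :
  Z \in Er F n r -> (W <= Z)%MS -> (Bz <= Z)%MS -> (\rank W + m1)%N = r ->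
  normz p g -> h != 0 -> <<famV W Bz Bc g p h t>>%MS \in ball r 1 Z.
Proof.
rewrite inEr => /andP[_ /eqP rZ] WZ BZ rW Ng h0.
have rV : \rank (famV W Bz Bc g p h t) = r by rewrite (famV_rank indep fz t Ng h0).
rewrite inE inEr genmx_id eqxx mxrank_gen rV eqxx /=.
rewrite (dI_r rZ); last by rewrite mxrank_gen.
have : (Z + <<famV W Bz Bc g p h t>> <= Z + yv Bz Bc p h t)%MS.
  by rewrite addsmx_sub addsmxSl genmxE famV_sub.
move/mxrankS => H; apply: leq_trans (leq_sub2r _ H) _.
rewrite leq_subLR; apply: leq_trans (mxrank_adds_leqif _ _).1 _.
by rewrite rZ leq_add2l rank_leq_row.
Qed.

Lemma bigmin_le (I : finType) (P : pred I) (f : I -> nat) d i :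
  P i -> (\big[minn/d]_(j | P j) f j <= f i)%N.
Proof.
move=> Pi; rewrite -big_filter.
have : i \in [seq j <- index_enum I | P j] by rewrite mem_filter Pi mem_index_enum.
elim: [seq _ <- _ | _] => //= j s IH; rewrite inE big_cons => /orP[/eqP <-|/IH H].
  exact: geq_minl.
exact: leq_trans (geq_minr _ _) H.
Qed.

Lemma notA r rho (C : {set 'M[F]_n}) (C1 V : 'M[F]_n) k (S : 'M[F]_(k, n)) :
  C1 \in C -> C1 \in Er F n r -> V \in Er F n r -> (S <= V)%MS -> (S <= C1)%MS ->
  (r - rho < \rank S)%N -> (rho <= r)%N -> V \notin Aset r rho C.
Proof.
move=> C1C; rewrite !inEr => /andP[_ /eqP r1] /andP[_ /eqP rV] SV SC rS rr.
rewrite inE negb_and inEr; apply/orP; right.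
have cap : (\rank S <= \rank (V :&: C1))%N by apply: mxrankS; rewrite sub_capmx SV.
have sc := mxrank_sum_cap V C1.
have dl : (dI V C1 < rho)%N.
  have yr : (\rank (V :&: C1) <= \rank V)%N by apply: mxrankS; apply: capmxSl.
  rewrite (dI_r rV r1); move: sc cap rS rr yr; rewrite rV r1.
  have L : forall x y z : nat, (x + y)%N = (r + r)%N -> (z <= y)%N -> (r - rho < z)%N -> (rho <= r)%N -> (y <= r)%N -> (x - r < rho)%N by move=> *; lia.
  exact: L.
have : (dIC V C <= dI V C1)%N by rewrite /dIC; apply: (bigmin_le (P := fun X => X \in C)).
by move=> H; rewrite neq_ltn (leq_ltn_trans H dl).
Qed.

Lemma lower_eq r rho (C : {set 'M[F]_n}) (Z C1 : 'M[F]_n) :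
  Z \in Er F n r -> C1 \in C -> C1 \in Er F n r -> dI Z C1 = rho -> (rho <= r)%N ->
  (#|NVset F rho| * (#|NVset F rho| * 1) <= #|ball r 1 Z :\: Aset r rho C|)%N.
Proof.
move=> ZE C1C C1E dZ rr.
have := ZE; rewrite inEr => /andP[_ /eqP rZ].
have := C1E; rewrite inEr => /andP[_ /eqP r1].
set W := (Z :&: C1)%MS; set X := (Z :\: C1)%MS; set Y := (C1 :\: Z)%MS.
set Bz := row_base X; set Bc := row_base Y.
have rW : \rank W = (r - rho)%N.
  have sc := mxrank_sum_cap Z C1.
  have ge : (\rank Z <= \rank (Z + C1)%MS)%N by apply: mxrankS; apply: addsmxSl.
  move: dZ; rewrite (dI_r rZ r1) => dZ.
  move: sc ge dZ; rewrite rZ r1 /W.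
  have L : forall x y : nat, (x + y)%N = (r + r)%N -> (r <= x)%N -> (x - r)%N = rho -> y = (r - rho)%N by move=> *; lia.
  exact: L.
have rX : \rank X = rho.
  have := mxrank_cap_compl Z C1; rewrite -/W -/X rW rZ.
  have L : forall y : nat, (r - rho + y)%N = r -> y = rho by move=> *; lia.
  exact: L.
have rY : \rank Y = rho.
  have := mxrank_cap_compl C1 Z; rewrite capmxC -/W -/Y rW r1.
  have L : forall y : nat, (r - rho + y)%N = r -> y = rho by move=> *; lia.
  exact: L.
have BzX : (Bz <= X)%MS by rewrite /Bz eq_row_base.
have BcY : (Bc <= Y)%MS by rewrite /Bc eq_row_base.
have fz : row_free Bz := row_base_free X.
have WZ : (W <= Z)%MS := capmxSl _ _.
have WC : (W <= C1)%MS := capmxSr _ _.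
have BZ : (Bz <= Z)%MS := submx_trans BzX (diffmxSl _ _).
have BC : (Bc <= C1)%MS := submx_trans BcY (diffmxSl _ _).
have indep : forall (w : 'rV_n) (a : 'rV_(\rank X)) (b : 'rV_(\rank Y)),
    (w <= W)%MS -> w + a *m Bz + b *m Bc = 0 -> a = 0 /\ b = 0.
  apply: (@indep_gen W _ _ Bz Bc Z fz (row_base_free _)).
  - by rewrite addsmx_sub WZ BZ.
  - have ZY : (Z :&: Y)%MS = 0 by rewrite capmxC capmx_diff.
    exact: (cap0_rows ZY (submx_refl Z) BcY).
  - have CX : (C1 :&: X)%MS = 0 by rewrite capmxC capmx_diff.
    exact: (cap0_rows CX WC BzX).
have rWX : (\rank W + \rank X)%N = r by rewrite rW rX subnK.
pose P0 := setX (NVset F (\rank X)) (setX (NVset F (\rank Y)) [set (0 : F)]).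
pose phi (x : ('I_(\rank X) * 'rV[F]_(\rank X)) *
   (('I_(\rank Y) * 'rV[F]_(\rank Y)) * F)) :=
   <<famV W Bz Bc x.1.2 x.1.1 x.2.1.2 x.2.2>>%MS.
have inj : {in P0 &, injective phi}.
  move=> [[p g] [[p1 h] t]] [[p' g'] [[p1' h'] t']]; rewrite !inE /=.
  move=> /and3P[Ng Nh _] /and3P[Ng' Nh' _] E.
  by case: (famV_inj indep Ng Nh Ng' Nh' E) => /= pp gg [pp1 hh] tt; subst.
have sub : phi @: P0 \subset ball r 1 Z :\: Aset r rho C.
  apply/subsetP => V /imsetP[[[p g] [[p1 h] t]] Hx ->].
  rewrite !inE /= in Hx; case/and3P: Hx => Ng Nh /eqP t0; subst t.
  have h0 := normz_neq0 Nh.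
  have Vb := fam_in_ball indep fz 0 ZE WZ BZ rWX Ng h0.
  rewrite in_setD Vb andbT.
  have VE : phi (p, g, (p1, h, 0)) \in Er F n r by move: Vb; rewrite inE => /andP[].
  set S := (W + yv Bz Bc p h 0)%MS.
  apply: (notA (S := S) C1C C1E VE) => //.
  - by rewrite /phi /= genmxE /S /famV; apply: addsmxS (addsmxSl W _) (submx_refl _).
  - rewrite /S addsmx_sub WC /yv scale0r mul0mx addr0 /=.
    exact: submx_trans (submxMl _ _) BC.
  - rewrite /S rank_add_row ?rW ?ltnSn //.
    exact: (yv_notin indep p 0 (addsmxSl _ _) h0).
apply: leq_trans (subset_leq_card sub); rewrite (card_in_imset inj).
by rewrite !cardsX cards1 rX rY.
Qed.

Lemma lower_lt r rho (C : {set 'M[F]_n}) (Z C1 : 'M[F]_n) :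
  Z \in Er F n r -> C1 \in C -> C1 \in Er F n r -> (dI Z C1 < rho)%N ->
  (0 < rho)%N -> (rho <= r)%N ->
  (1 + #|NVset F rho.-1| * (#|NVset F (n - r)| * #|F|)
     <= #|ball r 1 Z :\: Aset r rho C|)%N.
Proof.
move=> ZE C1C C1E dZ r0 rr.
have := ZE; rewrite inEr => /andP[gZ /eqP rZ].
have := C1E; rewrite inEr => /andP[_ /eqP r1].
set S0 := (Z :&: C1)%MS.
have rS0 : (r - rho < \rank S0)%N.
  have sc := mxrank_sum_cap Z C1.
  have ge : (\rank Z <= \rank (Z + C1)%MS)%N by apply: mxrankS; apply: addsmxSl.
  have yr : (\rank S0 <= \rank Z)%N by apply: mxrankS; apply: capmxSl.
  move: dZ; rewrite (dI_r rZ r1) => dZ.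
  move: sc ge dZ yr; rewrite rZ r1 -/S0.
  have L : forall x y : nat, (x + y)%N = (r + r)%N -> (r <= x)%N -> (x - r < rho)%N ->
     (y <= r)%N -> (r - rho < y)%N by move=> *; lia.
  exact: L.
set s := (r - rho).+1.
have ss : (s <= \rank S0)%N := rS0.
set W := <<(pid_mx s : 'M_(\rank S0)) *m row_base S0>>%MS.
have rW : \rank W = s.
  by rewrite /W mxrank_gen mxrankMfree ?row_base_free // rank_pid_mx.
have WS0 : (W <= S0)%MS.
  by rewrite /W genmxE; apply: submx_trans (submxMl _ _) _; rewrite eq_row_base.
have WZ : (W <= Z)%MS := submx_trans WS0 (capmxSl _ _).
have WC : (W <= C1)%MS := submx_trans WS0 (capmxSr _ _).
set X := (Z :\: W)%MS; set Y := (Z^C)%MS.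
set Bz := row_base X; set Bc := row_base Y.
have rX : \rank X = rho.-1.
  have := mxrank_cap_compl Z W; rewrite (capmx_idPr WZ) -/X rW rZ /s.
  have L : forall y : nat, ((r - rho).+1 + y)%N = r -> y = rho.-1 by move=> *; lia.
  exact: L.
have rY : \rank Y = (n - r)%N by rewrite /Y mxrank_compl rZ.
have BzX : (Bz <= X)%MS by rewrite /Bz eq_row_base.
have BcY : (Bc <= Y)%MS by rewrite /Bc eq_row_base.
have fz : row_free Bz := row_base_free X.
have BZ : (Bz <= Z)%MS := submx_trans BzX (diffmxSl _ _).
have indep : forall (w : 'rV_n) (a : 'rV_(\rank X)) (b : 'rV_(\rank Y)),
    (w <= W)%MS -> w + a *m Bz + b *m Bc = 0 -> a = 0 /\ b = 0.
  apply: (@indep_gen W _ _ Bz Bc Z fz (row_base_free _)).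
  - by rewrite addsmx_sub WZ BZ.
  - exact: (cap0_rows (capmx_compl Z) (submx_refl Z) BcY).
  - have WX : (W :&: X)%MS = 0 by rewrite capmxC capmx_diff.
    exact: (cap0_rows WX (submx_refl W) BzX).
have rWX : (\rank W + \rank X)%N = r by rewrite rW rX /s; lia.
have ZWB : (Z <= W + Bz)%MS.
  have e := addsmx_diff_cap_eq Z W.
  apply: submx_trans (_ : (Z <= X + Z :&: W)%MS) _; first by rewrite e.
  rewrite addsmxC; apply: addsmxS; first exact: capmxSr.
  by rewrite /Bz eq_row_base.
pose Pt := setX (NVset F (\rank X)) (setX (NVset F (\rank Y)) [set: F]).
pose phi (x : ('I_(\rank X) * 'rV[F]_(\rank X)) *
   (('I_(\rank Y) * 'rV[F]_(\rank Y)) * F)) :=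
   <<famV W Bz Bc x.1.2 x.1.1 x.2.1.2 x.2.2>>%MS.
have inj : {in Pt &, injective phi}.
  move=> [[p g] [[p1 h] t]] [[p' g'] [[p1' h'] t']]; rewrite !inE /=.
  move=> /andP[Ng /andP[Nh _]] /andP[Ng' /andP[Nh' _]] E.
  by case: (famV_inj indep Ng Nh Ng' Nh' E) => /= pp gg [pp1 hh] tt; subst.
have Zn : Z \notin phi @: Pt.
  apply/imsetP => [[[[p g] [[p1 h] t]] Hx E]].
  rewrite !inE /= in Hx; case/andP: Hx => Ng /andP[Nh _].
  have : (yv Bz Bc p h t <= Z)%MS.
    rewrite E /phi /= genmxE; exact: addsmxSr.
  by apply/negP; apply: (yv_notin indep p t ZWB (normz_neq0 Nh)).
have sub : Z |: phi @: Pt \subset ball r 1 Z :\: Aset r rho C.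
  apply/subsetP => V; rewrite in_setU1 => /orP[/eqP ->|].
    rewrite in_setD.
    have Zb : Z \in ball r 1 Z.
      rewrite inE ZE /= (dI_r rZ rZ) leq_subLR.
      have ZZ : (Z + Z <= Z)%MS by rewrite addsmx_sub submx_refl.
      by apply: leq_trans (mxrankS ZZ) _; rewrite rZ leq_addr.
    rewrite Zb andbT.
    exact: (notA (S := S0) C1C C1E ZE (capmxSl _ _) (capmxSr _ _) rS0 rr).
  case/imsetP => [[[p g] [[p1 h] t]] Hx ->].
  rewrite !inE /= in Hx; case/andP: Hx => Ng /andP[Nh _].
  have h0 := normz_neq0 Nh.
  have Vb := fam_in_ball indep fz t ZE WZ BZ rWX Ng h0.
  rewrite in_setD Vb andbT.
  have VE : phi (p, g, (p1, h, t)) \in Er F n r by move: Vb; rewrite inE => /andP[].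
  apply: (notA (S := W) C1C C1E VE) => //.
  - by rewrite /phi /= genmxE /famV; apply: submx_trans (addsmxSl _ _) (addsmxSl _ _).
  - by rewrite rW /s ltnSn.
apply: leq_trans (subset_leq_card sub); rewrite cardsU1 Zn (card_in_imset inj).
by rewrite !cardsX cardsT rX rY.
Qed.
End Up.

Definition G (x : rat) m := \sum_(i < m) x ^+ i.

Lemma G_S x m : G x m.+1 = 1 + x * G x m.
Proof. by rewrite /G big_ord_recl expr0 mulr_sumr; congr (_ + _); apply: eq_bigr => i _; rewrite exprS. Qed.

Lemma G_ge0 x m : 0 <= x -> 0 <= G x m.
Proof. by move=> x0; apply: sumr_ge0 => i _; apply: exprn_ge0. Qed.

Lemma G_mono x a b : 0 <= x -> (a <= b)%N -> G x a <= G x b.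
Proof.
move=> x0; elim: b => [|b IH]; first by rewrite leqn0 => /eqP ->.
rewrite leq_eqVlt => /orP[/eqP ->//|]; rewrite ltnS => /IH H.
apply: le_trans H _; rewrite /G big_ord_recr /= lerDl; exact: exprn_ge0.
Qed.

Lemma G_ineq x k M : 2 <= x -> (k.+2 <= M)%N -> (G x k.+1) ^+ 2 <= 1 + G x k * G x M * x.
Proof.
move=> x2 kM.
have x0 : 0 <= x by apply: le_trans x2; lra.
have g0 := G_ge0 k x0.
have gM : G x k.+2 <= G x M := G_mono x0 kM.
move: gM; rewrite !G_S => gM.
set g := G x k in g0 gM *; set gm := G x M in gM *.
have h1 : 0 <= x * g by apply: mulr_ge0.
have h2 : 0 <= x * g * (gm - (1 + x * (1 + x * g))) by apply: mulr_ge0; lra.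
have h3 : 0 <= x * g * ((x - 1) + x * g * (x - 1)) by apply: mulr_ge0 => //; nra.
nra.
Qed.

Section Card.
Variable F : finFieldType.
Local Notation q := #|F|.

Lemma q_gt1 : (1 < q)%N. Proof. exact: card_finNzRing_gt1. Qed.

Lemma N_eq m : (#|NVset F m|%:R : rat) = G q%:R m.
Proof.
have H := NVset_card F m.
have q1 : (q%:R - 1 : rat) != 0 by rewrite subr_eq0 pnatr_eq1 (gtn_eqF q_gt1).
have qm1 : (q.-1%:R : rat) = q%:R - 1 by rewrite -subn1 natrB // ltnW // q_gt1.
have qm : (1 <= q ^ m)%N by rewrite expn_gt0 ltnW // q_gt1.
apply: (mulIf q1); rewrite -qm1 -natrM H natrB // natrX subrX1 mulrC qm1 //.
Qed.

Lemma gauss_eq m : gaussb #|F| m 1 = (#|NVset F m|%:R : rat).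
Proof.
have q1 : (q%:R - 1 : rat) != 0 by rewrite subr_eq0 pnatr_eq1 (gtn_eqF q_gt1).
rewrite N_eq /gaussb big_ord1 /= expr0 expr1 /G.
by apply: (mulIf q1); rewrite divfK // subrX1 mulrC.
Qed.
End Card.

Theorem lemma12 (F : finFieldType) (n r rho : nat) (C : {set 'M[F]_n})
  (Z : 'M[F]_n) :
  (r <= n./2)%N -> (0 < rho)%N -> (rho < r)%N ->
  C \subset Er F n r ->
  covering_radius r C = rho ->
  Z \in Zset r rho C ->
  ((#|Aset r rho C :&: ball r 1 Z|%:R : rat)
     <= VC #|F| n r 1 - cj #|F| rho)%R.
Proof.
move=> hr h0 hr2 CE cov ZZ.
have ZE : Z \in Er F n r by move: ZZ; rewrite inE => /andP[].
have hh : (odd n + (n./2 + n./2))%N = n by rewrite addnn odd_double_half.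
have dZ : (dIC Z C <= rho)%N.
  by rewrite -cov /covering_radius; exact: (leq_bigmax_cond (P := fun U => U \in Er F n r) _ ZE).
have [C1 C1C dC1] : exists2 C1, C1 \in C & (dI Z C1 <= rho)%N.
  case: (boolP [exists X in C, dI Z X <= rho]%N) => [/exists_inP [X XC HX] | ]; first by exists X.
  rewrite negb_exists_in => /forall_inP H.
  have : (rho < dIC Z C)%N.
    rewrite /dIC; apply: (big_ind (fun x => rho < x)%N).
    - move: hh; lia.
    - by move=> x y hx hy; rewrite leq_min hx hy.
    - by move=> X XC; rewrite ltnNge H.
  by rewrite ltnNge dZ.
have C1E : C1 \in Er F n r := subsetP CE _ C1C.
set B := ball r 1 Z; set A := Aset r rho C.
have cI : (#|A :&: B| = #|B| - #|B :\: A|)%N by rewrite -(cardsID A B) setIC addnK.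
have le : (#|B :\: A| <= #|B|)%N by apply: subset_leq_card; apply: subsetDl.
have up := ball_upper ZE.
have low : cj #|F| rho <= (#|B :\: A|%:R : rat).
  rewrite /cj gauss_eq.
  case: (ltngtP (dI Z C1) rho) => [lt | gt | eq].
  - have L := @lower_lt F n r rho C Z C1 ZE C1C C1E lt h0 (ltnW hr2).
    apply: le_trans (_ : _ <= ((1 + #|NVset F rho.-1| * (#|NVset F (n - r)| * #|F|))%N%:R : rat)) _; last by rewrite ler_nat.
    rewrite natrD !natrM !N_eq.
    have [k E] : exists k, rho = k.+1 by exists rho.-1; rewrite prednK.
    have kM : (k.+2 <= n - r)%N by move: hh; rewrite E in hr2; lia.
    have x2 : (2 : rat) <= #|F|%:R by rewrite (ler_nat _ 2) q_gt1.
    rewrite E /= mulrA; exact: G_ineq.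
  - by move: dC1; rewrite leqNgt gt.
  - have L := @lower_eq F n r rho C Z C1 ZE C1C C1E eq (ltnW hr2).
    by rewrite expr2 -natrM ler_nat; move: L; rewrite muln1.
have VCe : VC #|F| n r 1 = 1 + #|F|%:R * gaussb #|F| r 1 * gaussb #|F| (n - r) 1.
  rewrite /VC big_ord_recr big_ord1 /NC /= /gaussb !big_ord0.
  by rewrite mul0n mul1n expr0 expr1 !mulr1.
rewrite cI natrB // VCe !gauss_eq.
have upR : (#|B|%:R : rat) <= 1 + #|F|%:R * #|NVset F r|%:R * #|NVset F (n - r)|%:R.
  have e : ((#|NVset F r| * (#|NVset F (n - r)| * #|F|))%N%:R : rat) =
     #|F|%:R * #|NVset F r|%:R * #|NVset F (n - r)|%:R by rewrite !natrM; ring.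
  by move: up; rewrite -(ler_nat rat) natrD e.
lra.
Qed.
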